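(* Let $R\subseteq\mathcal{D}^\Sigma$ be an $n$-ary relation ($n=|\Sigma|$) that is join reducible to $N$ factors of arity at most $l$, i.e. $R=R^{\Lambda_1}\Join\dots\Join R^{\Lambda_N}$ for a cover $\Sigma=\Lambda_1\cup\dots\cup\Lambda_N$ with $0<|\Lambda_i|<n$, $|\Lambda_i|\le l$, and suppose $N\le|\mathcal{D}|^{n-l-1}$. Then $\neg R$ is projoin reducible. In particular, if $R$ has a $k$-key with $k\le n-4$ when $|\mathcal{D}|=2$, or with $k\le n-3$ when $|\mathcal{D}|\ge3$, then $\neg R$ is projoin reducible.
   Context: Attributed relation: $R\subseteq\mathcal{D}^\Sigma$, $\Sigma$ finite; $\neg R=\mathcal{D}^\Sigma\setminus R$; $\pi_\Gamma$ restricts tuples to $\Gamma$. The join of $R_i\subseteq\mathcal{D}^{\Lambda_i}$ is $\{a\in\mathcal{D}^{\cup_i\Lambda_i}: a|_{\Lambda_i}\in R_i\ \forall i\}$. A proper subset $\textup{K}\subset\Sigma$ with $|\textup{K}|=k$ is a $k$-key of $R$ if for $a,b\in R$, $a|_{\textup{K}}=b|_{\textup{K}}$ implies $a=b$. $S\subseteq\mathcal{D}^\Sigma$ is projoin reducible if there exist a finite set $\textup{T}$ disjoint from $\Sigma$, a cover $\textup{T}\cup\Sigma=\Lambda_1\cup\dots\cup\Lambda_m$ with $0<|\Lambda_i|<|\Sigma|$, and $S^{\Lambda_i}\subseteq\mathcal{D}^{\Lambda_i}$ with $S=\pi_\Sigma[S^{\Lambda_1}\Join\dots\Join S^{\Lambda_m}]$.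 *)

(* Defs.v *)
From mathcomp Require Import all_boot.
Set Implicit Arguments. Unset Strict Implicit. Unset Printing Implicit Defensive.

(* A tuple over a subset Λ ⊆ X (an element of D^Λ) is encoded as a partial
   tuple {ffun X -> option D} whose domain (non-None coordinates) is Λ. *)

Section Rel.
Variables (D X : finType).

Definition ptuple := {ffun X -> option D}.

Definition pdom (t : ptuple) : {set X} := [set x | t x != None].

Definition restr (L : {set X}) (a : {ffun X -> D}) : ptuple :=
  [ffun x => if x \in L then Some (a x) else None].

Definition rel_on (L : {set X}) (R : {set ptuple}) : Prop :=
  forall t, t \in R -> pdom t = L.

Definition join m (L : 'I_m -> {set X}) (Rs : 'I_m -> {set ptuple})
  : {set {ffun X -> D}} :=
  [set a | [forall i, restr (L i) a \in Rs i]].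

Definition covers m (L : 'I_m -> {set X}) : Prop :=
  \bigcup_(i < m) L i = [set: X].
End Rel.

(* projoin reducibility of S ⊆ D^Σ; the extra attributes T are a fresh finite
   type, disjointness from Σ is enforced by using the sum type T + Σ. *)
Definition projoin_reducible (D Sig : finType) (S : {set {ffun Sig -> D}}) : Prop :=
  exists (T : finType) (m : nat) (L : 'I_m -> {set (T + Sig)%type})
         (Rs : 'I_m -> {set ptuple D (T + Sig)%type}),
    [/\ 0 < m, covers L,
        (forall i, 0 < #|L i| < #|Sig|),
        (forall i, rel_on (L i) (Rs i)) &
        S = [set a : {ffun Sig -> D} |
              [exists b in join L Rs, [forall s : Sig, b (inr s) == a s]]]].

Definition join_reducible_to (D Sig : finType) (R : {set {ffun Sig -> D}})
  (N l : nat) : Prop :=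
  exists (L : 'I_N -> {set Sig}) (Rs : 'I_N -> {set ptuple D Sig}),
    [/\ 0 < N, covers L,
        (forall i, 0 < #|L i| < #|Sig| /\ #|L i| <= l),
        (forall i, rel_on (L i) (Rs i)) &
        R = join L Rs].

Definition is_key (D Sig : finType) (R : {set {ffun Sig -> D}}) (K : {set Sig}) : Prop :=
  K \proper [set: Sig] /\
  forall a b : {ffun Sig -> D}, a \in R -> b \in R -> (forall x, x \in K -> a x = b x) -> a = b.

(* Main.v *)
Require Import Defs.
From mathcomp Require Import all_boot zify.

Lemma restr_eqP (D X : finType) (L : {set X}) (a b : {ffun X -> D}) :
  restr L a = restr L b <-> {in L, a =1 b}.
Proof.
split.
- move=> /ffunP H x xL; move: (H x); rewrite !ffunE xL; by case.
- move=> H; apply/ffunP=> x; rewrite !ffunE; case: ifP => // xL; by rewrite H.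
Qed.

Lemma pdom_restr (D X : finType) (L : {set X}) (a : {ffun X -> D}) :
  pdom (restr L a) = L.
Proof. apply/setP=> x; rewrite inE ffunE; by case: (x \in L). Qed.

Lemma restr_img (D X : finType) (L : {set X}) (B : {set {ffun X -> D}}) (b : {ffun X -> D}) :
  (forall b b' : {ffun X -> D}, {in L, b =1 b'} -> b \in B -> b' \in B) ->
  (restr L b \in [set restr L b' | b' in B]) = (b \in B).
Proof.
move=> HB; apply/imsetP/idP.
- case=> b' b'B /restr_eqP E; apply: (HB b') => // x xL; by rewrite E.
- move=> bB; by exists b.
Qed.

Lemma part1 (D Sig : finType) (R : {set {ffun Sig -> D}}) N l :
  join_reducible_to R N l -> N <= #|D| ^ (#|Sig| - l - 1) -> projoin_reducible (~: R).
Proof.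
case=> L [Rs] [N0 covL szL relL ->] HN.
set t := #|Sig| - l - 1.
pose T := ordinal t.
pose F := {ffun T -> D}.
have cardF : #|{: F}| = #|D| ^ t by rewrite card_ffun card_ord.
have HNF : N <= #|{: F}| by rewrite cardF.
pose i0 : 'I_N := Ordinal N0.
pose f (u : F) : 'I_N := insubd i0 (enum_rank u : nat).
have fsurj : forall i, exists u, f u = i.
  move=> i; exists (enum_val (widen_ord HNF i)).
  apply: val_inj; rewrite /f enum_valK val_insubd /= ltn_ord //.
pose uof (b : {ffun (T + Sig) -> D}) : F := [ffun x => b (inl x)].
pose aof (b : {ffun (T + Sig) -> D}) : {ffun Sig -> D} := [ffun s => b (inr s)].
pose L' i : {set (T + Sig)%type} := (inl @: [set: T]) :|: (inr @: L i).
pose B i := [set b | (f (uof b) == i) ==> (restr (L i) (aof b) \notin Rs i)].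
pose S i := [set restr (L' i) b | b in B i].
have SB : forall i b, (restr (L' i) b \in S i) = (b \in B i).
  move=> i b; apply: restr_img => b1 b2 E; rewrite !inE.
  have -> : uof b1 = uof b2.
    apply/ffunP=> x; rewrite !ffunE E // inE; apply/orP; left; apply: imset_f; exact: in_setT.
  have -> : restr (L i) (aof b1) = restr (L i) (aof b2).
    apply/restr_eqP=> s sL; rewrite !ffunE E // inE; apply/orP; right; exact: imset_f.
  by [].
exists T, N, L', S; split => //.
- apply/setP=> z; rewrite inE; apply/bigcupP.
  case: z => [x|s].
  + exists i0 => //; rewrite inE; apply/orP; left; apply: imset_f; exact: in_setT.
  + have : s \in \bigcup_(i < N) L i by rewrite covL inE.
    case/bigcupP=> i _ si; exists i => //; rewrite inE; apply/orP; right; exact: imset_f.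
- move=> i.
  have -> : #|L' i| = t + #|L i|.
    rewrite cardsU.
    have -> : inl @: [set: T] :&: inr @: L i = set0.
      apply/setP=> z; rewrite !inE; apply/andP; case=> /imsetP [x _ ->] /imsetP [y _ ].
      by [].
    rewrite cards0 subn0 !card_imset; [ | exact: inr_inj | exact: inl_inj].
    by rewrite cardsT card_ord.
  move: (szL i); rewrite /t; lia.
- move=> i p /imsetP [b _ ->]; exact: pdom_restr.
- apply/setP=> a; rewrite !inE; apply/idP/idP.
  + case/forallPn => i Hi.
    have [u fu] := fsurj i.
    pose b : {ffun (T + Sig) -> D} := [ffun z => match z with inl x => u x | inr s => a s end].
    apply/existsP; exists b; apply/andP; split.
    * rewrite inE; apply/forallP=> j; rewrite SB inE.
      have -> : uof b = u by apply/ffunP=> x; rewrite !ffunE.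
      have -> : aof b = a by apply/ffunP=> x; rewrite !ffunE.
      rewrite fu; apply/implyP=> /eqP <-; exact: Hi.
    * apply/forallP=> s; by rewrite ffunE.
  + case/existsP=> b /andP [bJ /forallP Hb].
    have -> : a = aof b by apply/ffunP=> s; rewrite ffunE (eqP (Hb s)).
    apply/forallP=> H.
    move: bJ; rewrite inE => /forallP /(_ (f (uof b))); rewrite SB inE eqxx /=.
    by rewrite H.
Qed.

Lemma pow2b j : j + 4 <= 2 ^ (j + 2).
Proof. elim: j => // j IH; rewrite !addSn expnS; lia. Qed.

Lemma pow3b d j : 3 <= d -> j + 3 <= d ^ (j + 1).
Proof. move=> d3; elim: j => [|j IH]; first by rewrite expn1. rewrite !addSn expnS; nia. Qed.

Lemma keyjoin (D Sig : finType) (R : {set {ffun Sig -> D}}) K :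
  is_key R K -> #|K| + 2 <= #|Sig| -> join_reducible_to R #|~: K| (#|K| + 1).
Proof.
case=> /properP [_ [x0 _ x0K]] Hkey Hn.
have x0C : x0 \in ~: K by rewrite inE.
pose L (i : 'I_#|~: K|) : {set Sig} := enum_val i |: K.
pose Rs (i : 'I_#|~: K|) := [set restr (L i) a | a in R].
exists L, Rs; split.
- by apply/card_gt0P; exists x0.
- apply/setP=> x; rewrite inE; apply/bigcupP.
  case: (boolP (x \in K)) => xK.
  + exists (enum_rank_in x0C x0) => //; by rewrite inE xK orbT.
  + have xC : x \in ~: K by rewrite inE.
    exists (enum_rank_in x0C x) => //; by rewrite !inE (enum_rankK_in x0C xC) eqxx.
- move=> i; have := enum_valP i; rewrite inE => vK.
  rewrite cardsU1 vK; have := cardsC K; lia.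
- move=> i p /imsetP [a _ ->]; exact: pdom_restr.
- apply/setP=> a; rewrite inE; apply/idP/forallP.
  + move=> aR i; apply: imset_f aR.
  + move=> H.
    have Hb : forall i, exists2 b, b \in R & {in L i, a =1 b}.
      move=> i; case/imsetP: (H i) => b bR /restr_eqP E; exists b => // y yL; by rewrite E.
    have [b0 b0R E0] := Hb (enum_rank_in x0C x0).
    suff -> : a = b0 by [].
    apply/ffunP=> x; case: (boolP (x \in K)) => xK.
    * by rewrite E0 // inE xK orbT.
    * have xC : x \in ~: K by rewrite inE.
      have [b bR Eb] := Hb (enum_rank_in x0C x).
      have xL : x \in L (enum_rank_in x0C x) by rewrite !inE (enum_rankK_in x0C xC) eqxx.
      rewrite Eb //.
      have -> : b = b0 by apply: Hkey => // y yK; rewrite -Eb ?E0 // inE yK orbT.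
      by [].
Qed.

Theorem theorem27 (D Sig : finType) (R : {set {ffun Sig -> D}}) :
  (forall N l : nat,
      join_reducible_to R N l ->
      N <= #|D| ^ (#|Sig| - l - 1) ->
      projoin_reducible (~: R))
  /\
  (forall K : {set Sig},
      is_key R K ->
      (#|D| = 2 /\ #|K| + 4 <= #|Sig|) \/ (3 <= #|D| /\ #|K| + 3 <= #|Sig|) ->
      projoin_reducible (~: R)).
Proof.
split; first by move=> N l; exact: part1.
move=> K HK Hc.
have cK := cardsC K.
apply: (@part1 _ _ _ #|~: K| (#|K| + 1)).
  apply: keyjoin HK _; case: Hc; lia.
case: Hc => [[-> H]|[H3 H]].
- have [j Hj] : exists j, #|Sig| = #|K| + 4 + j by exists (#|Sig| - (#|K| + 4)); lia.
  have -> : #|Sig| - (#|K| + 1) - 1 = j + 2 by lia.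
  have := pow2b j; lia.
- have [j Hj] : exists j, #|Sig| = #|K| + 3 + j by exists (#|Sig| - (#|K| + 3)); lia.
  have -> : #|Sig| - (#|K| + 1) - 1 = j + 1 by lia.
  have := @pow3b _ j H3; lia.
Qed.
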